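(* Suppose that $\kappa = \nu^+$, and $\theta$ is a regular infinite cardinal less than $\nu$ such that $d(\theta,\nu) = \nu$. Then $\clubsuit_\kappa^*[NS_\kappa|E^\kappa_\theta]$ holds.
   Context: For cardinals $\tau\leq\mu$ with $\tau\geq1$, $\mu\geq\omega$, $d(\tau,\mu)$ is the least cardinality of an $X\subseteq[\mu]^\tau$ such that every $e\in[\mu]^\tau$ has a subset belonging to $X$. $E^\kappa_\theta$ is the set of limit ordinals below $\kappa$ of cofinality $\theta$; $NS_\kappa|E^\kappa_\theta = \{B\subseteq\kappa : B\cap E^\kappa_\theta \text{ nonstationary}\}$; for an ideal $J$ on $\kappa$, $J^* = \{A : \kappa\setminus A\in J\}$. $acc(\kappa)$ is the set of nonzero limit ordinals below $\kappa$. $\clubsuit_\kappa^*[J]$: there are $s^i_\alpha\subseteq\alpha$ with $\sup s^i_\alpha=\alpha$ for $i<\alpha\in acc(\kappa)$ such that $\{\alpha<\kappa : \exists i<\alpha\,(s^i_\alpha\subseteq A)\}\in J^*$ for every $A\subseteq\kappa$ of size $\kappa$. *)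

(* Defs.v *)
(* Ordinals below kappa are modelled as the elements of a type K
   equipped with a strict well-order [lt]; subsets are predicates K -> Prop. *)
From Stdlib Require Import List.

Set Implicit Arguments.

Section Defs.
Variable K : Type.
Variable lt : K -> K -> Prop.

Definition well_order : Prop :=
  well_founded lt /\
  (forall x y z, lt x y -> lt y z -> lt x z) /\
  (forall x y, lt x y \/ x = y \/ lt y x).

Definition le (x y : K) : Prop := x = y \/ lt x y.

Definition setT : K -> Prop := fun _ => True.
Definition seg (a : K) : K -> Prop := fun x => lt x a.
Definition subset {T : Type} (A B : T -> Prop) : Prop := forall x, A x -> B x.

Definition card_le {T U : Type} (A : T -> Prop) (B : U -> Prop) : Prop :=
  exists f : T -> U, (forall x, A x -> B (f x)) /\
    (forall x y, A x -> A y -> f x = f y -> x = y).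
Definition card_eq {T U : Type} (A : T -> Prop) (B : U -> Prop) : Prop :=
  card_le A B /\ card_le B A.
Definition card_lt {T U : Type} (A : T -> Prop) (B : U -> Prop) : Prop :=
  card_le A B /\ ~ card_le B A.

Definition finite_set (A : K -> Prop) : Prop :=
  exists l : list K, forall x, A x -> In x l.

Definition is_cardinal (a : K) : Prop :=
  forall b, lt b a -> card_lt (seg b) (seg a).

Definition cofinal_in (A : K -> Prop) (a : K) : Prop :=
  subset A (seg a) /\ (forall x, lt x a -> exists y, A y /\ le x y).

Definition cof_is (a t : K) : Prop :=
  (exists A, cofinal_in A a /\ card_eq A (seg t)) /\
  (forall A, cofinal_in A a -> card_le (seg t) A).

Definition regular_infinite_cardinal (t : K) : Prop :=
  is_cardinal t /\ ~ finite_set (seg t) /\ cof_is t t.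

Definition is_limit (a : K) : Prop :=
  (exists x, lt x a) /\ (forall x, lt x a -> exists y, lt x y /\ lt y a).

Definition E_cof (t : K) : K -> Prop := fun a => is_limit a /\ cof_is a t.

Definition sized_subset (n t : K) (e : K -> Prop) : Prop :=
  subset e (seg n) /\ card_eq e (seg t).

Definition d_family (t n : K) (X : (K -> Prop) -> Prop) : Prop :=
  (forall e, X e -> sized_subset n t e) /\
  (forall e, sized_subset n t e -> exists x, X x /\ subset x e).

Definition d_eq (t n : K) : Prop :=
  (exists X, d_family t n X /\ card_eq X (seg n)) /\
  (forall X, d_family t n X -> card_le (seg n) X).

Definition club (C : K -> Prop) : Prop :=
  (forall x, exists y, C y /\ lt x y) /\
  (forall a, (exists x, lt x a) ->
     (forall x, lt x a -> exists y, C y /\ lt x y /\ lt y a) -> C a).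

Definition nonstationary (S : K -> Prop) : Prop :=
  exists C, club C /\ forall x, C x -> ~ S x.

Definition NS_restr (E : K -> Prop) (B : K -> Prop) : Prop :=
  nonstationary (fun x => B x /\ E x).

Definition dual_filter (J : (K -> Prop) -> Prop) (A : K -> Prop) : Prop :=
  J (fun x => ~ A x).

(* clubsuit^*_kappa[J] ; s a i = s^i_a *)
Definition clubsuit_star (J : (K -> Prop) -> Prop) : Prop :=
  exists s : K -> K -> (K -> Prop),
    (forall a i, is_limit a -> lt i a -> cofinal_in (s a i) a) /\
    (forall A : K -> Prop, card_eq A setT ->
       dual_filter J (fun a => exists i, lt i a /\ subset (s a i) A)).

End Defs.

(* Main.v *)
Require Import Defs.
From Stdlib Require Import List Lia Classical ClassicalEpsilon Cantor PeanoNat.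

Lemma wo_irrefl {K} (lt : K -> K -> Prop) : well_order lt -> forall x, ~ lt x x.
Proof.
  intros [Hwf _] x. induction (Hwf x) as [x _ IH]. intro H. exact (IH x H H).
Qed.

Lemma wo_trans {K} (lt : K -> K -> Prop) : well_order lt -> forall x y z, lt x y -> lt y z -> lt x z.
Proof. intros [_ [H _]]; exact H. Qed.

Lemma wo_tri {K} (lt : K -> K -> Prop) : well_order lt -> forall x y, lt x y \/ x = y \/ lt y x.
Proof. intros [_ [_ H]]; exact H. Qed.

Lemma wo_least {K} (lt : K -> K -> Prop) : well_order lt -> forall P : K -> Prop,
  (exists x, P x) -> exists x, P x /\ forall y, P y -> le lt x y.
Proof.
  intros Hw P [x Px]. destruct Hw as [Hwf [Htr Htri]].
  revert Px. induction (Hwf x) as [x _ IH]. intro Px.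
  destruct (classic (exists y, P y /\ lt y x)) as [[y [Py Hy]]|Hn].
  - exact (IH y Hy Py).
  - exists x. split; [exact Px|]. intros y Py.
    destruct (Htri x y) as [H|[H|H]].
    + right; exact H.
    + left; exact H.
    + exfalso; apply Hn; eauto.
Qed.

Lemma not_lt_le {K} (lt : K -> K -> Prop) : well_order lt -> forall x y, ~ lt x y -> le lt y x.
Proof. intros Hw x y H. destruct (wo_tri lt Hw x y) as [h|[h|h]]; [tauto|left; auto|right; auto]. Qed.

Lemma le_lt_trans {K} (lt : K -> K -> Prop) : well_order lt -> forall x y z, le lt x y -> lt y z -> lt x z.
Proof. intros Hw x y z [h|h] h2; [subst; auto| eapply wo_trans; eauto]. Qed.

Lemma lt_le_trans {K} (lt : K -> K -> Prop) : well_order lt -> forall x y z, lt x y -> le lt y z -> lt x z.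
Proof. intros Hw x y z h [h2|h2]; [subst; auto| eapply wo_trans; eauto]. Qed.

Lemma le_lt_false {K} (lt : K -> K -> Prop) : well_order lt -> forall x y, le lt x y -> lt y x -> False.
Proof. intros Hw x y h1 h2. apply (wo_irrefl lt Hw x). eapply le_lt_trans; eauto. Qed.

Lemma card_le_trans {T U V} (A : T -> Prop) (B : U -> Prop) (C : V -> Prop) :
  card_le A B -> card_le B C -> card_le A C.
Proof.
  intros [f [f1 f2]] [g [g1 g2]]. exists (fun x => g (f x)). split; auto.
Qed.

Lemma card_le_sub {T U} (A A' : T -> Prop) (B : U -> Prop) :
  subset A A' -> card_le A' B -> card_le A B.
Proof. intros Hs [f [f1 f2]]. exists f. split; auto. Qed.

Lemma card_le_inv {T U} (A : T -> Prop) (B : U -> Prop) (f : U -> T) :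
  inhabited U -> (forall a, A a -> exists b, B b /\ f b = a) -> card_le A B.
Proof.
  intros Hi H. exists (fun a => epsilon Hi (fun b => B b /\ f b = a)). split.
  - intros a Ha. exact (proj1 (epsilon_spec Hi _ (H a Ha))).
  - intros a1 a2 H1 H2 E.
    rewrite <- (proj2 (epsilon_spec Hi _ (H a1 H1))), <- (proj2 (epsilon_spec Hi _ (H a2 H2))).
    rewrite E. reflexivity.
Qed.

Definition succ_of {K} (lt : K -> K -> Prop) x y := lt x y /\ forall w, lt x w -> le lt y w.
Definition sg {K} (lt : K -> K -> Prop) (i : inhabited K) x := epsilon i (succ_of lt x).
Fixpoint plus {K} (lt : K -> K -> Prop) (i : inhabited K) x n :=
  match n with 0 => x | S m => sg lt i (plus lt i x m) end.

Lemma sg_spec {K} (lt : K -> K -> Prop) i : well_order lt -> forall x,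
  (exists w, lt x w) -> succ_of lt x (sg lt i x).
Proof.
  intros Hw x Hex. unfold sg. apply epsilon_spec.
  destruct (wo_least lt Hw (fun w => lt x w) Hex) as [y [h1 h2]]. exists y; split; auto.
Qed.

Lemma cover {K} (lt : K -> K -> Prop) i : well_order lt -> forall z,
  (forall y, le lt z y) -> forall n, (forall k, k < n -> succ_of lt (plus lt i z k) (plus lt i z (S k))) ->
  forall g, le lt g (plus lt i z n) -> exists k, k <= n /\ g = plus lt i z k.
Proof.
  intros Hw z Hz n. induction n as [|n IH]; intros Hs g Hg.
  - exists 0. split; auto. simpl in *. destruct Hg as [h|h]; auto.
    exfalso. eapply le_lt_false; eauto.
  - destruct Hg as [h|h]. { exists (S n); auto. }
    destruct (Hs n ltac:(lia)) as [_ hs].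
    destruct (classic (lt (plus lt i z n) g)) as [h2|h2].
    + exfalso. eapply le_lt_false; [eauto| apply (hs g h2) | exact h].
    + apply (not_lt_le lt Hw) in h2. destruct (IH ltac:(intros; apply Hs; lia) g h2) as [k [hk1 hk2]].
      exists k; split; auto.
Qed.

Lemma plus_chain {K} (lt : K -> K -> Prop) i : well_order lt -> forall z c,
  (forall y, le lt z y) -> ~ finite_set (seg lt c) ->
  forall n, lt (plus lt i z n) c /\ succ_of lt (plus lt i z n) (plus lt i z (S n)).
Proof.
  intros Hw z c Hz Hinf.
  assert (Hlt : forall n, (forall k, k < n -> succ_of lt (plus lt i z k) (plus lt i z (S k))) -> lt (plus lt i z n) c ->
             succ_of lt (plus lt i z n) (plus lt i z (S n)) /\ lt (plus lt i z (S n)) c).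
  { intros n Hs Hn.
    destruct (classic (exists w, lt (plus lt i z n) w /\ lt w c)) as [[w [w1 w2]]|Hno].
    - assert (S1 := sg_spec lt i Hw (plus lt i z n) (ex_intro _ w w1)).
      split; [exact S1|]. simpl. eapply le_lt_trans; [eauto| apply (proj2 S1 w w1)| exact w2].
    - exfalso. apply Hinf. exists (map (plus lt i z) (seq 0 (S n))).
      intros g Hg. destruct (classic (lt (plus lt i z n) g)) as [h|h]. { exfalso; eauto. }
      apply (not_lt_le lt Hw) in h. destruct (cover lt i Hw z Hz n Hs g h) as [k [k1 k2]].
      subst. apply in_map. apply in_seq. lia. }
  assert (H : forall n, lt (plus lt i z n) c /\ forall k, k < n -> succ_of lt (plus lt i z k) (plus lt i z (S k))).
  { induction n as [|n [IH1 IH2]].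
    - split; [|intros; lia]. simpl.
      destruct (classic (exists g, lt g c)) as [[g hg]|hn].
      + eapply le_lt_trans; eauto.
      + exfalso. apply Hinf. exists nil. intros g hg. apply hn; eauto.
    - destruct (Hlt n IH2 IH1) as [h1 h2]. split; auto.
      intros k hk. destruct (Nat.eq_dec k n); [subst; auto| apply IH2; lia]. }
  intro n. split; [apply H|]. apply (proj2 (H (S n))). lia.
Qed.

Lemma plus_inj {K} (lt : K -> K -> Prop) i : well_order lt -> forall z c,
  (forall y, le lt z y) -> ~ finite_set (seg lt c) ->
  forall a b, plus lt i z a = plus lt i z b -> a = b.
Proof.
  intros Hw z c Hz Hinf.
  assert (Hinc : forall k j, lt (plus lt i z k) (plus lt i z (S (j + k)))).
  { intros k j. induction j as [|j IH].
    - apply (proj2 (plus_chain lt i Hw z c Hz Hinf k)).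
    - eapply wo_trans; [eauto|exact IH|]. apply (proj2 (plus_chain lt i Hw z c Hz Hinf (S (j+k)))). }
  intros a b E. destruct (Nat.lt_trichotomy a b) as [h|[h|h]]; auto; exfalso.
  - replace b with (S ((b - a - 1) + a)) in E by lia.
    apply (wo_irrefl lt Hw (plus lt i z a)). rewrite E at 2. apply Hinc.
  - replace a with (S ((a - b - 1) + b)) in E by lia.
    apply (wo_irrefl lt Hw (plus lt i z b)). rewrite <- E at 2. apply Hinc.
Qed.

Lemma hotel {K} (lt : K -> K -> Prop) : well_order lt -> forall c,
  ~ finite_set (seg lt c) -> card_le (fun y => le lt y c) (seg lt c).
Proof.
  intros Hw c Hinf. set (i := inhabits c).
  destruct (wo_least lt Hw (fun _ => True) (ex_intro _ c I)) as [z [_ Hz]].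
  assert (Hz' : forall y, le lt z y) by auto.
  pose (h := fun y => if excluded_middle_informative (y = c) then z else
              if excluded_middle_informative (exists n, y = plus lt i z n) then sg lt i y else y).
  assert (hs : forall y, (y = c /\ h y = plus lt i z 0) \/
     (y <> c /\ exists n, y = plus lt i z n /\ h y = plus lt i z (S n)) \/
     (y <> c /\ (forall n, y <> plus lt i z n) /\ h y = y)).
  { intro y. unfold h. destruct (excluded_middle_informative (y = c)) as [e|ne]; [left; auto|].
    destruct (excluded_middle_informative (exists n, y = plus lt i z n)) as [[n e]|ne2].
    - right; left. split; auto. exists n. split; auto. subst; reflexivity.
    - right; right. split; [auto|split; auto]. intros n e; apply ne2; eauto. }
  assert (PI := plus_inj lt i Hw z c Hz' Hinf).
  assert (PC := plus_chain lt i Hw z c Hz' Hinf).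
  exists h. split.
  - intros y Hy. unfold seg.
    destruct (hs y) as [[e1 e2]|[[e1 [n [e2 e3]]]|[e1 [e2 e3]]]].
    + rewrite e2; apply PC.
    + rewrite e3; apply PC.
    + rewrite e3; destruct Hy; [congruence|auto].
  - intros y1 y2 _ _ E.
    destruct (hs y1) as [[a1 a2]|[[a1 [n1 [a2 a3]]]|[a1 [a2 a3]]]];
    destruct (hs y2) as [[b1 b2]|[[b1 [n2 [b2 b3]]]|[b1 [b2 b3]]]].
    + congruence.
    + rewrite a2, b3 in E. apply PI in E. discriminate.
    + rewrite a2, b3 in E. exfalso; eapply b2; eauto.
    + rewrite a3, b2 in E. apply PI in E. discriminate.
    + rewrite a3, b3 in E. apply PI in E. subst; congruence.
    + rewrite a3, b3 in E. exfalso; eapply b2; eauto.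
    + rewrite a3, b2 in E. exfalso; eapply a2; eauto.
    + rewrite a3, b3 in E. exfalso; eapply a2; eauto.
    + congruence.
Qed.

Lemma nu_limit {K} (lt : K -> K -> Prop) nu : well_order lt -> is_cardinal lt nu ->
  ~ finite_set (seg lt nu) -> forall x, lt x nu -> exists y, lt x y /\ lt y nu.
Proof.
  intros Hw Hc Hinf x Hx. apply NNPP. intro Hn.
  assert (Hs : forall g, lt g nu -> le lt g x).
  { intros g hg. apply (not_lt_le lt Hw). intro h. apply Hn; eauto. }
  assert (Hi : ~ finite_set (seg lt x)).
  { intros [l hl]. apply Hinf. exists (x :: l). intros g hg.
    destruct (Hs g hg) as [e|e]; [left; auto| right; apply hl; exact e]. }
  apply (proj2 (Hc x Hx)). eapply card_le_trans; [|apply (hotel lt Hw x Hi)].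
  exists (fun g => g). split; auto.
Qed.

Definition Lim {K} (lt : K -> K -> Prop) i l := ~ exists x, lt x l /\ sg lt i x = l.

Lemma P_lemma {K} (lt : K -> K -> Prop) nu : well_order lt -> is_cardinal lt nu ->
  ~ finite_set (seg lt nu) -> card_le (fun p : nat * K => lt (snd p) nu) (seg lt nu).
Proof.
  intros Hw Hc Hinf. set (i := inhabits nu).
  assert (NL := nu_limit lt nu Hw Hc Hinf).
  assert (SS : forall x, lt x nu -> succ_of lt x (sg lt i x) /\ lt (sg lt i x) nu).
  { intros x hx. destruct (NL x hx) as [y [y1 y2]].
    assert (S1 := sg_spec lt i Hw x (ex_intro _ y y1)). split; auto.
    eapply le_lt_trans; [eauto|apply (proj2 S1 y y1)|exact y2]. }
  assert (PL : forall l n, lt l nu -> lt (plus lt i l n) nu).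
  { intros l n hl. induction n; simpl; auto. apply SS; auto. }
  assert (SI : forall p q, lt p nu -> lt q nu -> sg lt i p = sg lt i q -> p = q).
  { intros p q hp hq E. destruct (wo_tri lt Hw p q) as [h|[h|h]]; auto; exfalso.
    - assert (H1 : lt (sg lt i p) (sg lt i q)).
      { eapply le_lt_trans; [eauto| apply (proj2 (proj1 (SS p hp)) q h)| apply (SS q hq)]. }
      rewrite E in H1. exact (wo_irrefl lt Hw _ H1).
    - assert (H1 : lt (sg lt i q) (sg lt i p)).
      { eapply le_lt_trans; [eauto| apply (proj2 (proj1 (SS q hq)) p h)| apply (SS p hp)]. }
      rewrite E in H1. exact (wo_irrefl lt Hw _ H1). }
  assert (DEC : forall a, lt a nu -> exists p : K * nat, lt (fst p) nu /\ Lim lt i (fst p) /\ a = plus lt i (fst p) (snd p)).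
  { intros a. pose proof (proj1 Hw) as Hwf. induction (Hwf a) as [a _ IH]. intro ha.
    destruct (classic (exists x, lt x a /\ sg lt i x = a)) as [[x [x1 x2]]|hn].
    - assert (hx : lt x nu) by (eapply wo_trans; eauto).
      destruct (IH x x1 hx) as [[l n] [p1 [p2 p3]]]. exists (l, S n). simpl in *.
      split; auto. split; auto. rewrite p3 in x2. rewrite <- x2. reflexivity.
    - exists (a, 0). simpl. auto. }
  assert (UN : forall n l l' n', lt l nu -> lt l' nu -> Lim lt i l -> Lim lt i l' ->
             plus lt i l n = plus lt i l' n' -> l = l' /\ n = n').
  { induction n as [|n IH]; intros l l' [|n'] hl hl' Ll Ll' E; simpl in E.
    - auto.
    - exfalso. apply Ll. exists (plus lt i l' n'). split; auto. rewrite E. apply SS. apply PL; auto.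
    - exfalso. apply Ll'. exists (plus lt i l n). split; auto. rewrite <- E. apply SS. apply PL; auto.
    - apply SI in E; try apply PL; auto. destruct (IH l l' n' hl hl' Ll Ll' E). auto. }
  pose (i2 := inhabits (nu, 0)).
  pose (dec := fun a => epsilon i2 (fun p : K * nat => lt (fst p) nu /\ Lim lt i (fst p) /\ a = plus lt i (fst p) (snd p))).
  assert (DS : forall a, lt a nu -> lt (fst (dec a)) nu /\ Lim lt i (fst (dec a)) /\ a = plus lt i (fst (dec a)) (snd (dec a))).
  { intros a ha. unfold dec. apply epsilon_spec. apply DEC; auto. }
  exists (fun p => plus lt i (fst (dec (snd p))) (to_nat (snd (dec (snd p)), fst p))).
  split.
  - intros [k a] ha. simpl in *. unfold seg. apply PL. apply DS; auto.
  - intros [k a] [k' a'] ha ha' E. cbn [fst snd] in *.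
    destruct (DS a ha) as [d1 [d2 d3]]. destruct (DS a' ha') as [e1 [e2 e3]].
    destruct (UN _ _ _ _ d1 e1 d2 e2 E) as [E1 E2].
    assert (TI : forall p q : nat * nat, to_nat p = to_nat q -> p = q).
    { intros p q e. rewrite <- (cancel_of_to p), <- (cancel_of_to q), e. reflexivity. }
    apply TI in E2. inversion E2.
    rewrite d3, e3, E1, H0. reflexivity.
Qed.

Lemma bounded {K} (lt : K -> K -> Prop) nu z0 : well_order lt -> is_cardinal lt nu ->
  ~ finite_set (seg lt nu) -> (forall a, card_le (seg lt a) (seg lt nu)) ->
  ~ card_le (setT (K:=K)) (seg lt nu) -> lt z0 nu ->
  forall S : nat -> K, exists b, forall n, lt (S n) b.
Proof.
  intros Hw Hc Hinf H1 H2 Hz S. apply NNPP. intro Hn.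
  assert (Hb : forall b, exists n, le lt b (S n)).
  { intro b. apply NNPP. intro h. apply Hn. exists b. intro n. apply NNPP. intro h2.
    apply h. exists n. apply (not_lt_le lt Hw). exact h2. }
  pose (G := fun c => proj1_sig (constructive_indefinite_description _ (H1 c))).
  assert (GS : forall c, (forall x, seg lt c x -> seg lt nu (G c x)) /\
     (forall x y, seg lt c x -> seg lt c y -> G c x = G c y -> x = y)).
  { intro c. exact (proj2_sig (constructive_indefinite_description _ (H1 c))). }
  pose (nb := fun y => epsilon (inhabits 0) (fun n => le lt y (S n))).
  assert (NB : forall y, le lt y (S (nb y))).
  { intro y. unfold nb. apply epsilon_spec. apply Hb. }
  pose (F := fun y => if excluded_middle_informative (y = S (nb y)) then (2 * nb y, z0)
                      else (2 * nb y + 1, G (S (nb y)) y)).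
  apply H2. eapply card_le_trans; [|apply (P_lemma lt nu Hw Hc Hinf)].
  exists F. split.
  - intros y _. unfold F. destruct (excluded_middle_informative (y = S (nb y))) as [e|ne]; simpl; auto.
    apply (proj1 (GS _)). destruct (NB y); [congruence|auto].
  - intros y1 y2 _ _. unfold F.
    destruct (excluded_middle_informative (y1 = S (nb y1))) as [e1|n1];
    destruct (excluded_middle_informative (y2 = S (nb y2))) as [e2|n2]; intro E; inversion E.
    + assert (nb y1 = nb y2) by lia. congruence.
    + lia.
    + lia.
    + assert (Q : nb y1 = nb y2) by lia. rewrite Q in H3.
      apply (proj2 (GS _)) in H3; auto.
      * destruct (NB y1); [congruence|]. rewrite <- Q; auto.
      * destruct (NB y2); [congruence|auto].
Qed.

Theorem corollary3p27 (K : Type) (lt : K -> K -> Prop) (nu theta : K)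
  (Hwo : well_order lt)
  (* kappa (= K) is the successor cardinal nu^+ *)
  (Hnu_card : is_cardinal lt nu)
  (Hnu_inf : ~ finite_set (seg lt nu))
  (Hsucc1 : forall a, card_le (seg lt a) (seg lt nu))
  (Hsucc2 : ~ card_le (setT (K:=K)) (seg lt nu))
  (* theta regular infinite, theta < nu, d(theta,nu) = nu *)
  (Htheta : regular_infinite_cardinal lt theta)
  (Htn : lt theta nu)
  (Hd : d_eq lt theta nu) :
  clubsuit_star lt (NS_restr lt (E_cof lt theta)).
Proof.
  destruct Htheta as [Hthc _].
  assert (BND := bounded lt nu theta Hwo Hnu_card Hnu_inf Hsucc1 Hsucc2 Htn).
  destruct Hd as [[X [[HX1 HX2] [[h [h1 h2]] _]]] _].
  set (i0 := inhabits theta). set (iP := inhabits (fun _ : K => False)).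
  pose (G := fun c => proj1_sig (constructive_indefinite_description _ (Hsucc1 c))).
  assert (GS : forall c, (forall x, seg lt c x -> seg lt nu (G c x)) /\
     (forall x y, seg lt c x -> seg lt c y -> G c x = G c y -> x = y)).
  { intro c. exact (proj2_sig (constructive_indefinite_description _ (Hsucc1 c))). }
  pose (xs := fun i => epsilon iP (fun e => X e /\ h e = i)).
  assert (XS : forall e, X e -> xs (h e) = e).
  { intros e He. assert (Hs : X (xs (h e)) /\ h (xs (h e)) = h e).
    { unfold xs. apply epsilon_spec. exists e; auto. }
    apply h2; tauto. }
  pose (t := fun a i => fun y => lt y a /\ xs i (G a y)).
  pose (s := fun a i => if excluded_middle_informative (cofinal_in lt (t a i) a) then t a i else seg lt a).
  exists s. split.
  { intros a i _ _. unfold s. destruct (excluded_middle_informative (cofinal_in lt (t a i) a)); auto.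
    split; [intros x hx; exact hx|]. intros x hx; exists x; split; [auto|left; auto]. }
  intros A HA. unfold dual_filter, NS_restr, nonstationary.
  assert (AU : forall y, exists a, A a /\ lt y a).
  { destruct HA as [_ [f [f1 f2]]]. intro y. apply NNPP. intro hn.
    destruct (BND (fun _ => y)) as [b hb]. specialize (hb 0).
    apply Hsucc2. eapply card_le_trans; [|apply (Hsucc1 b)].
    exists f. split; auto. intros x _. unfold seg.
    assert (Af := f1 x I). eapply le_lt_trans; [eauto| |exact hb].
    apply (not_lt_le lt Hwo). intro h3. apply hn. eauto. }
  pose (C := fun al => lt nu al /\ forall b, lt b al -> exists a, A a /\ lt b a /\ lt a al).
  exists C. split.
  { split.
    - intro x. destruct (BND (fun n => match n with 0 => x | _ => nu end)) as [b0 hb0].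
      assert (hx := hb0 0). assert (hn := hb0 1). simpl in hx, hn.
      pose (nx := fun y => epsilon i0 (fun a => A a /\ lt y a)).
      assert (NXs : forall y, A (nx y) /\ lt y (nx y)).
      { intro y. unfold nx. apply epsilon_spec. apply AU. }
      pose (sq := nat_rect (fun _ => K) (nx b0) (fun _ y => nx y)).
      destruct (BND sq) as [ub hub].
      destruct (wo_least lt Hwo (fun y => forall n, lt (sq n) y) (ex_intro _ ub hub)) as [al [Hal1 Hal2]].
      assert (b0al : lt b0 al).
      { eapply wo_trans; [eauto| apply (NXs b0) | apply (Hal1 0)]. }
      exists al. split; [split|].
      + eapply wo_trans; eauto.
      + intros b hb. assert (hnot : ~ forall n, lt (sq n) b).
        { intro hh. exact (le_lt_false lt Hwo _ _ (Hal2 b hh) hb). }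
        apply not_all_ex_not in hnot. destruct hnot as [n hn2].
        apply (not_lt_le lt Hwo) in hn2.
        exists (sq (S n)). simpl. split; [apply NXs|]. split; [|apply (Hal1 (S n))].
        eapply le_lt_trans; [eauto|exact hn2|apply NXs].
      + eapply wo_trans; eauto.
    - intros a [x hx] Hc. split.
      + destruct (Hc x hx) as [y [[yn _] [_ ya]]]. eapply wo_trans; eauto.
      + intros b hb. destruct (Hc b hb) as [y [[_ yC] [by0 ya]]].
        destruct (yC b by0) as [a' [A' [ba' a'y]]]. exists a'. split; auto. split; auto.
        eapply wo_trans; eauto. }
  intros al [Cn Ca] [Hbad [_ Hcof]]. apply Hbad.
  destruct Hcof as [[D [HDc [[pi [pi1 pi2]] _]]] Hmin].
  pose (D2 := fun d => D d /\ forall d', D d' -> lt (pi d') (pi d) -> lt d' d).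
  assert (D2cof : forall x, lt x al -> exists d, D2 d /\ le lt x d).
  { intros x hx.
    destruct (proj2 HDc x hx) as [d1 [hd1 hd1']].
    destruct (wo_least lt Hwo (fun j => exists d, D d /\ le lt x d /\ pi d = j)
       (ex_intro _ (pi d1) (ex_intro _ d1 (conj hd1 (conj hd1' eq_refl))))) as [j0 [[d0 [Dd0 [xd0 pd0]]] Hj0]].
    exists d0. split; auto. split; auto. intros d' Dd' hp.
    destruct (wo_tri lt Hwo d' x) as [q|[q|q]].
    - eapply lt_le_trans; eauto.
    - exfalso. subst d'. apply (le_lt_false lt Hwo j0 (pi x)); [apply Hj0; exists x; split; auto; split; [left; auto| auto]| congruence].
    - exfalso. apply (le_lt_false lt Hwo j0 (pi d')); [apply Hj0; exists d'; split; auto; split; [right; auto| auto]| congruence]. }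
  assert (SMALL : forall b, lt b al -> exists g, lt g theta /\ card_le (fun d => D2 d /\ lt d b) (seg lt g)).
  { intros b hb. destruct (proj2 HDc b hb) as [ds [Dds bds]].
    exists (pi ds). split; [apply pi1; auto|]. exists pi. split.
    - intros d [[Dd Hrec] db]. unfold seg.
      destruct (wo_tri lt Hwo (pi d) (pi ds)) as [q|[q|q]]; auto; exfalso.
      + apply pi2 in q; auto. subst. exact (le_lt_false lt Hwo _ _ bds db).
      + apply Hrec in q; auto. apply (wo_irrefl lt Hwo d).
        eapply wo_trans; [eauto| |exact q]. eapply lt_le_trans; eauto.
    - intros d d' [[Dd _] _] [[Dd' _] _] E. apply pi2; auto. }
  pose (nxt := fun d => epsilon i0 (fun a => A a /\ lt d a /\ forall a', A a' -> lt d a' -> le lt a a')).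
  assert (NX : forall d, A (nxt d) /\ lt d (nxt d) /\ forall a', A a' -> lt d a' -> le lt (nxt d) a').
  { intro d. unfold nxt. apply epsilon_spec.
    destruct (wo_least lt Hwo (fun a => A a /\ lt d a) (AU d)) as [a [[a1 a2] a3]].
    exists a. split; [auto|split; [auto| intros; apply a3; auto]]. }
  assert (NXal : forall d, lt d al -> lt (nxt d) al).
  { intros d hd. destruct (Ca d hd) as [a [Aa [da aal]]].
    apply (le_lt_trans lt Hwo _ a _); [apply (proj2 (proj2 (NX d))); auto | exact aal]. }
  pose (Y := fun a => exists d, D2 d /\ a = nxt d).
  assert (Yal : forall a, Y a -> lt a al /\ A a).
  { intros a [d [[Dd _] ->]]. split; [apply NXal; apply (proj1 HDc); auto| apply NX]. }
  assert (Ycof : cofinal_in lt Y al).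
  { split; [intros a ha; apply Yal; auto|].
    intros x hx. destruct (D2cof x hx) as [d [D2d xd]]. exists (nxt d). split; [exists d; auto|].
    right. eapply le_lt_trans; [eauto|exact xd|apply NX]. }
  assert (YleT : card_le Y (seg lt theta)).
  { eapply card_le_trans; [apply (card_le_inv Y D2 nxt i0)|].
    - intros a [d [D2d ->]]. eauto.
    - apply (card_le_sub D2 D); [intros d [Dd _]; auto|]. exists pi; auto. }
  assert (TleY : card_le (seg lt theta) Y) by (apply Hmin; exact Ycof).
  pose (e := fun z => exists a, Y a /\ G al a = z).
  assert (Hsz : sized_subset lt nu theta e).
  { split; [|split].
    - intros z [a [Ya <-]]. apply (proj1 (GS al)). apply Yal; auto.
    - eapply card_le_trans; [apply (card_le_inv e Y (G al) i0)|exact YleT].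
      intros z [a [Ya <-]]. eauto.
    - eapply card_le_trans; [exact TleY|]. exists (G al). split.
      + intros a Ya. exists a; auto.
      + intros a b Ya Yb E. apply (proj2 (GS al)); auto; apply Yal; auto. }
  destruct (HX2 e Hsz) as [x [Xx xe]].
  set (i := h x).
  assert (XSx : xs i = x) by (apply XS; auto).
  assert (tsub : subset (t al i) Y).
  { intros z [zal hz]. rewrite XSx in hz. destruct (xe _ hz) as [a [Ya Ga]].
    assert (a = z) as <-; auto. apply (proj2 (GS al)); auto. apply Yal; auto. }
  assert (tcof : cofinal_in lt (t al i) al).
  { split; [intros z [hz _]; exact hz|]. intros b hb. apply NNPP. intro hn.
    destruct (SMALL b hb) as [g [hg hcl]].
    apply (proj2 (Hthc g hg)).
    destruct (HX1 x Xx) as [_ [_ Tx]].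
    eapply card_le_trans; [exact Tx|].
    eapply card_le_trans; [apply (card_le_inv x (t al i) (G al) i0)|].
    { intros w xw. destruct (xe w xw) as [a [Ya Ga]]. exists a. split; auto.
      split; [apply Yal; auto|]. rewrite XSx, Ga. exact xw. }
    eapply card_le_trans; [apply (card_le_inv (t al i) (fun d => D2 d /\ lt d b) nxt i0)|exact hcl].
    intros a ta. destruct (tsub a ta) as [d [D2d ->]]. exists d. split; auto. split; auto.
    assert (ab : lt (nxt d) b).
    { destruct (wo_tri lt Hwo (nxt d) b) as [q|[q|q]]; auto; exfalso; apply hn; exists (nxt d); split; auto.
      - left; auto.
      - right; auto. }
    eapply wo_trans; [eauto| apply NX | exact ab]. }
  exists i. split.
  - eapply wo_trans; [eauto| apply h1; auto| exact Cn].
  - unfold s. destruct (excluded_middle_informative (cofinal_in lt (t al i) al)) as [_|nc]; [|contradiction].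
    intros z tz. apply Yal. apply tsub. exact tz.
Qed.
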